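(* Let $(x^k)$ be generated by the variational-equilibrium augmented Lagrangian method described below, where each step satisfies the inexactness assumption described below, let $\bar x$ be a limit point of $(x^k)$, and assume that $h$ satisfies (classical) CPLD in $\bar x$. Then $\bar x$ is a global solution of $$\min_{x\in\mathbb{R}^n}\ \|g_+(x)\|^2\quad\text{s.t.}\quad h(x)\le0.$$ In particular, if there are feasible points (points $x$ with $g(x)\le 0$ and $h(x)\le0$), then $\bar x$ is feasible.
   Context: GNEP with shared constraints: $N$ players, $x=(x^1,\ldots,x^N)\in\mathbb{R}^n$, $x^\nu\in\mathbb{R}^{n_\nu}$; player $\nu$ solves $\min_{x^\nu}\theta_\nu(x)$ s.t. $g(x)\le0$, $h(x)\le0$, where $\theta_\nu:\mathbb{R}^n\to\mathbb{R}$, $g:\mathbb{R}^n\to\mathbb{R}^m$, $h:\mathbb{R}^n\to\mathbb{R}^p$ are continuously differentiable and all components of $g$ and $h$ are convex. Notation: $v_+=\max\{0,v\}$ componentwise; $\nabla f$ = transposed Jacobian, $\nabla_{x^\nu}f$ its rows for $x^\nu$; $\min$ componentwise; Euclidean norms. Augmented Lagrangian of player $\nu$: $L_a^\nu(x,u;\rho)=\theta_\nu(x)+\frac{\rho}{2}\|(g(x)+u/\rho)_+\|^2$. Method: choose $u^{\max}\ge0$, $\tau\in(0,1)$, $\gamma>1$, $\rho_0>0$, $x^0\in\mathbb{R}^n$, $\lambda^0\in\mathbb{R}^m$, $\mu^0\in\mathbb{R}^p$, $u^0\in[0,u^{\max}]^m$. For $k=0,1,2,\dots$ (assumed to run forever):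 (1) compute $(x^{k+1},\mu^{k+1})\in\mathbb{R}^{n+p}$ satisfying the inexactness assumption; (2) $\lambda^{k+1}=(u^k+\rho_kg(x^{k+1}))_+$; (3) if $\|\min\{-g(x^{k+1}),\lambda^{k+1}\}\|\le\tau\|\min\{-g(x^k),\lambda^k\}\|$ set $\rho_{k+1}=\rho_k$, else $\rho_{k+1}=\gamma\rho_k$; (4) $u^{k+1}=\min\{\lambda^{k+1},u^{\max}\}$ componentwise. Inexactness assumption: for all $k$ and every $\nu$, $\|\nabla_{x^\nu}L_a^\nu(x^{k+1},u^k;\rho_k)+\nabla_{x^\nu}h(x^{k+1})\mu^{k+1}\|\le\varepsilon_k$ and $\|\min\{-h(x^{k+1}),\mu^{k+1}\}\|\le\varepsilon'_k$, with $(\varepsilon_k)\subset[0,\infty)$ bounded and $(\varepsilon'_k)\subset[0,\infty)$, $\varepsilon'_k\to0$. Classical CPLD for $h$ at $x$ with $h(x)\le0$: whenever $\nabla h_j(x)$, $j\in J$, are positively linearly dependent (a nontrivial nonnegative combination vanishes) for some $J\subset\{j:h_j(x)=0\}$, the gradients $\nabla h_j(y)$, $j\in J$, are linearly dependent for all $y$ in a neighbourhood of $x$. *)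

(* Defs.v *)
From HB Require Import structures.
From mathcomp Require Import all_boot all_order all_algebra.
From mathcomp Require Import all_classical all_reals all_analysis.
Set Implicit Arguments. Unset Strict Implicit. Unset Printing Implicit Defensive.
Import Order.TTheory GRing.Theory Num.Theory.
Import numFieldNormedType.Exports.
Local Open Scope ring_scope.
Local Open Scope classical_set_scope.

Section GNEPDefs.
Variable R : realType.

Definition pd (n : nat) (f : 'rV[R]_n -> R) (x : 'rV[R]_n) (i : 'I_n) : R :=
  'D_(delta_mx ord0 i) f x.

Definition C1 (n : nat) (f : 'rV[R]_n -> R) : Prop :=
  (forall x, differentiable f x) /\ (forall i, continuous (fun x => pd f x i)).

Definition convex_fun (n : nat) (f : 'rV[R]_n -> R) : Prop :=
  forall (x y : 'rV[R]_n) (t : R), 0 <= t <= 1 ->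
    f (t *: x + (1 - t) *: y) <= t * f x + (1 - t) * f y.

Definition bnorm (I : finType) (P : pred I) (v : I -> R) : R :=
  Num.sqrt (\sum_(i | P i) v i ^+ 2).

Definition enorm (I : finType) (v : I -> R) : R := bnorm predT v.

Definition pos (a : R) : R := Num.max 0 a.

Definition La (n m : nat) (theta : 'rV[R]_n -> R) (g : 'I_m -> 'rV[R]_n -> R)
  (u : 'I_m -> R) (rho : R) (x : 'rV[R]_n) : R :=
  theta x + rho / 2 * (enorm (fun j => pos (g j x + u j / rho))) ^+ 2.

Definition CPLD (n p : nat) (h : 'I_p -> 'rV[R]_n -> R) (x : 'rV[R]_n) : Prop :=
  forall J : {set 'I_p},
    (forall j, j \in J -> h j x = 0) ->
    (exists alpha : 'I_p -> R,
        (forall j, j \in J -> 0 <= alpha j) /\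
        (exists2 j, j \in J & alpha j != 0) /\
        (forall i, \sum_(j in J) alpha j * pd (h j) x i = 0)) ->
    \forall y \near x, exists beta : 'I_p -> R,
        (exists2 j, j \in J & beta j != 0) /\
        (forall i, \sum_(j in J) beta j * pd (h j) y i = 0).

End GNEPDefs.

(* Main.v *)
Require Import Defs.
From HB Require Import structures.
From mathcomp Require Import all_boot all_order all_algebra.
From mathcomp Require Import all_classical all_reals all_analysis.
From mathcomp Require Import ring lra zify.
Import Order.TTheory GRing.Theory Num.Theory.
Import numFieldNormedType.Exports.
Local Open Scope ring_scope.
Local Open Scope classical_set_scope.

Section Helpers.
Variable R : realType.

Lemma cvg_sumU (T : Type) (F : set_system T) (FF : Filter F) (m : nat)
  (f : 'I_m -> T -> R) (l : 'I_m -> R) :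
  (forall j, f j @ F --> l j) ->
  (fun k => \sum_(j < m) f j k) @ F --> \sum_(j < m) l j.
Proof.
elim: m f l => [|m IH] f l H.
  rewrite big_ord0; under eq_fun do rewrite big_ord0; exact: cvg_cst.
rewrite big_ord_recr /=; under eq_fun do rewrite big_ord_recr /=.
apply: cvgD; last exact: H.
exact: (IH (fun j => f (widen_ord (leqnSn m) j))).
Qed.

Lemma ultra_lim (T : Type) (U : set_system T) (UU : UltraFilter U)
  (f : T -> R) (a b : R) :
  (\forall k \near U, a <= f k <= b) -> exists l : R, f x @[x --> U] --> l.
Proof.
move=> Hab.
have cp := @segment_compact R a b.
have FP : ProperFilter (fmap f U) by apply: fmap_proper_filter.
have FA : (fmap f U) `[a, b].
  by apply: filterS Hab => k /= Hk; rewrite /= in_itv /=.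
have [l [_ cl]] := cp (fmap f U) FP FA.
exists l => B Bl.
have [//|HC] := in_ultra_setVsetC (f @^-1` B) UU.
exfalso.
have HB : (fmap f U) (~` B) by [].
have [z [zC zB]] := cl _ _ HB Bl.
by apply: zC.
Qed.

Lemma ultra_pigeon (T : Type) (U : set_system T) (UU : UltraFilter U)
  (I : finType) (J : T -> I) : exists t, \forall k \near U, J k = t.
Proof.
apply: contrapT => Hn.
have H1 : forall t, \forall k \near U, J k <> t.
  move=> t; have [H|H] := in_ultra_setVsetC [set k | J k = t] UU.
    by exfalso; apply: Hn; exists t.
  exact: H.
have := filter_forall (@ultra_proper _ _ UU) H1.
move=> /filter_ex [k Hk].
exact: (Hk (J k)).
Qed.

End Helpers.
Arguments cvg_sumU {R}.
Arguments ultra_lim {R}.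

Section Helpers.
Variable R : realType.

Lemma carath (p n : nat) (w : 'I_p -> 'I_n -> R) (A : {set 'I_p}) (b : 'I_p -> R) :
  (forall j, j \in A -> 0 <= b j) ->
  exists J : {set 'I_p}, exists b' : 'I_p -> R,
    [/\ J \subset A, (forall j, j \in J -> 0 <= b' j),
       (forall i, \sum_(j in J) b' j * w j i = \sum_(j in A) b j * w j i) &
       (forall d : 'I_p -> R, (forall i, \sum_(j in J) d j * w j i = 0) ->
          forall j, j \in J -> d j = 0)].
Proof.
move: {2}#|A| (leqnn #|A|) => k; elim: k A b => [|k IH] A b HA Hb;
 (have [Hind|Hdep] := pselect (forall d : 'I_p -> R,
    (forall i, \sum_(j in A) d j * w j i = 0) -> forall j, j \in A -> d j = 0);
  [by exists A, b; split => //| ]).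
  exfalso; apply: Hdep => d _ j jA.
  by move: HA; rewrite leqn0 => /eqP /cards0_eq A0; move: jA; rewrite A0 inE.
move/existsNP: Hdep => [d /not_implyP [Hd /existsNP [j0 /not_implyP [j0A /eqP dj0]]]].
have [d' [Hd' [j1 j1A dj1]]] : exists d' : 'I_p -> R,
    (forall i, \sum_(j in A) d' j * w j i = 0) /\ exists2 j1, j1 \in A & 0 < d' j1.
  have [dpos|dneg] := ltP 0 (d j0).
    by exists d; split => //; exists j0.
  exists (fun j => - d j); split.
    by move=> i; under eq_bigr do rewrite mulNr; rewrite sumrN Hd oppr0.
  exists j0 => //; rewrite oppr_gt0 lt_neqAle dneg andbT //.
set P := fun j => (j \in A) && (0 < d' j).
have Pj1 : P j1 by rewrite /P j1A dj1.
case: (@arg_minP _ _ _ j1 P (fun j => b j / d' j) Pj1) => js /andP [jsA djs] Hmin.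
set t := b js / d' js.
have t0 : 0 <= t by rewrite /t divr_ge0 // ?Hb // ltW.
set b2 := fun j => b j - t * d' j.
have b2nn : forall j, j \in A -> 0 <= b2 j.
  move=> j jA; rewrite /b2 subr_ge0.
  have [dj|dj] := ltP 0 (d' j).
    have := Hmin j; rewrite /P jA dj => /(_ isT).
    by rewrite -/t => Ht; rewrite -ler_pdivlMr.
  apply: le_trans (Hb _ jA); rewrite mulr_ge0_le0 //.
have b2s : b2 js = 0 by rewrite /b2 /t divfK ?subrr // gt_eqF.
have sumA : forall i, \sum_(j in A) b2 j * w j i = \sum_(j in A) b j * w j i.
  move=> i; rewrite /b2; under eq_bigr do rewrite mulrBl -mulrA.
  by rewrite sumrB -mulr_sumr Hd' mulr0 subr0.
have cardA' : (#|A :\ js| <= k)%N.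
  by move: HA; rewrite (cardsD1 js A) jsA add1n ltnS.
have [J [b' [JA' b'nn b'sum b'ind]]] := IH (A :\ js) b2 cardA'
  (fun j jA' => b2nn j (fintype.subsetP (subD1set A js) j jA')).
exists J, b'; split => //.
- exact: fintype.subset_trans JA' (subD1set A js).
- move=> i; rewrite b'sum -sumA (big_setD1 js jsA) /= b2s mul0r add0r //.
Qed.

End Helpers.
Arguments carath {R}.

Section Helpers.
Variable R : realType.

Lemma pos_id {a : R} : 0 <= a -> pos a = a.
Proof. by move=> h; rewrite /pos max_r. Qed.
Lemma pos_0 {a : R} : a <= 0 -> pos a = 0.
Proof. by move=> h; rewrite /pos max_l. Qed.
Lemma pos_ge0 (a : R) : 0 <= pos a.
Proof. by rewrite /pos le_max lexx. Qed.
Lemma pos_ge (a : R) : a <= pos a.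
Proof. by rewrite /pos le_max lexx orbT. Qed.

Definition qf (s : R) := pos s ^+ 2.

Lemma qf_ineq (s t : R) :
  0 <= qf s - qf t - 2 * pos t * (s - t) <= (s - t) ^+ 2.
Proof.
rewrite /qf; have sq := sqr_ge0 (s - t); have [s0|s0] := leP 0 s; have [t0|t0] := leP 0 t.
- rewrite !pos_id //; apply/andP; split; nra.
- rewrite (pos_id s0) (pos_0 (ltW t0)); apply/andP; split; nra.
- rewrite (pos_id t0) (pos_0 (ltW s0)).
  have st : 0 <= t * (- s) by apply: mulr_ge0 => //; lra.
  have ss : 0 <= s * s by nra.
  apply/andP; split; nra.
- rewrite (pos_0 (ltW t0)) (pos_0 (ltW s0)); apply/andP; split; nra.
Qed.

Lemma qf_derive (t : R) : is_derive t 1 qf (2 * pos t).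
Proof.
have H : (fun h : R => h^-1 *: ((qf \o shift t) (h *: 1) - qf t)) @ 0^' --> 2 * pos t.
  apply/cvgrPdist_le => e e0.
  have Hne : \forall h \near (0:R)^', h != 0 by exact: nbhs_dnbhs_neq.
  have Hle : \forall h \near (0:R)^', `|h| <= e.
    exact: (nbhs_dnbhs (@nbhs0_le _ R e e0)).
  apply: filterS2 Hne Hle => h hn0 hle /=.
  rewrite /shift /= [h *: 1]mulr1.
  have := qf_ineq (h + t) t; rewrite addrK => /andP [i1 i2].
  have -> : 2 * pos t - h^-1 * (qf (h + t) - qf t) =
      - h^-1 * (qf (h + t) - qf t - 2 * pos t * h).
    by field; exact: hn0.
  rewrite normrM normrN normrV ?unitfE // (ger0_norm i1).
  rewrite ler_pdivrMl ?normr_gt0 //.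
  apply: le_trans i2 _.
  have -> : h ^+ 2 = `|h| * `|h| by rewrite -normrM -expr2 ger0_norm // sqr_ge0.
  by apply: ler_pM => //.
split; first by apply/cvg_ex; exists (2 * pos t).
by apply: cvg_lim.
Qed.

End Helpers.
Arguments qf {R}.
Arguments qf_derive {R}.
Arguments pos_id {R a}.
Arguments pos_0 {R a}.
Arguments pos_ge0 {R}.
Arguments pos_ge {R}.

Section Helpers.
Variable R : realType.

Lemma qf_diff (t : R) : differentiable (@qf R) t.
Proof. by apply/derivable1_diffP; have [] := qf_derive t. Qed.

Lemma pd_qcomp n (G : 'rV[R]_n -> R) x i : differentiable G x ->
  differentiable (fun y => qf (G y)) x /\
  pd (fun y => qf (G y)) x i = 2 * pos (G x) * pd G x i.
Proof.
move=> dG.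
have dq : differentiable (qf \o G) x.
  by apply: differentiable_comp => //; exact: qf_diff.
split; first exact: dq.
rewrite /pd (deriveE _ dq) diff_comp //; last exact: qf_diff.
rewrite /= diff1E; last exact: qf_diff.
rewrite derive1E.
have HH := qf_derive (G x).
rewrite (@derive_val _ _ _ _ _ _ _ HH).
by rewrite -deriveE //; exact: mulrC.
Qed.

End Helpers.

Section Helpers.
Variable R : realType.

Lemma pd_shift n (G : 'rV[R]_n -> R) (c : R) x i : differentiable G x ->
  differentiable (fun y => G y + c) x /\ pd (fun y => G y + c) x i = pd G x i.
Proof.
move=> dG.
have -> : (fun y => G y + c) = G + cst c by [].
split; first by apply: differentiableD.
rewrite /pd deriveD ?derive_cst ?addr0 //; exact: diff_derivable.
Qed.

Lemma pd_La n m (th : 'rV[R]_n -> R) (g : 'I_m -> 'rV[R]_n -> R) (u : 'I_m -> R)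
  (rho : R) x i :
  (forall y, differentiable th y) -> (forall j y, differentiable (g j) y) ->
  pd (La th g u rho) x i =
  pd th x i + rho * \sum_(j < m) pos (g j x + u j / rho) * pd (g j) x i.
Proof.
move=> dth dg.
have E : La th g u rho =
   th + (rho / 2) \*: (\sum_(j < m) (fun y => qf (g j y + u j / rho))).
  apply/funext => y /=.
  rewrite /La /enorm /bnorm sqr_sqrtr; last by apply: sumr_ge0 => j _; exact: sqr_ge0.
  by rewrite fct_sumE.
have dq : forall j y, differentiable (fun y => qf (g j y + u j / rho)) y.
  by move=> j y; have [dG _] := @pd_shift _ (g j) (u j / rho) y i (dg j y); have [] := @pd_qcomp R _ _ _ i dG.
rewrite E /pd deriveD; last first.
- by apply: diff_derivable; apply: differentiableZ; apply: differentiable_sum => j; apply: dq.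
- exact: diff_derivable.
rewrite deriveZ; last by apply: derivable_sum => j; exact: diff_derivable.
rewrite derive_sum; last by move=> j; exact: diff_derivable.
congr (_ + _).
rewrite [LHS]/GRing.scale /= !mulr_sumr; apply: eq_bigr => j _.
have [dG HG] := @pd_shift _ (g j) (u j / rho) x i (dg j x).
have [_ Hq] := @pd_qcomp R _ _ _ i dG.
rewrite /pd in Hq HG; rewrite Hq HG.
have [->|r0] := eqVneq rho 0; first by rewrite !mul0r.
by field.
Qed.

End Helpers.
Arguments pd_La {R}.
Arguments pd_shift {R}.

Section Helpers.
Variable R : realType.

Lemma grad_ineq n (f : 'rV[R]_n -> R) (x y : 'rV[R]_n) : convex_fun f -> differentiable f x ->
  \sum_i (y 0 i - x 0 i) * pd f x i <= f y - f x.
Proof.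
move=> cf df.
set d := y - x.
have E : 'D_d f x = \sum_i (y 0 i - x 0 i) * pd f x i.
  rewrite /pd deriveE // {1}(row_sum_delta d) linear_sum; apply: eq_bigr => i _.
  by rewrite linearZ /= deriveE // /d !mxE.
rewrite -E.
have dd : derivable f x d by exact: diff_derivable.
have Hc : (fun h : R => h^-1 *: ((f \o shift x) (h *: d) - f x)) @ 0^'+ --> 'D_d f x.
  move=> A HA; have := dd; move/cvg_ex => [l Hl].
  have HlD : 'D_d f x = l by apply: cvg_lim.
  rewrite HlD in HA; have := Hl A HA.
  move=> [e /= e0 He]; exists e => // z zb z0; apply: He => //.
  by rewrite gt_eqF.
have := @closed_cvg _ _ _ _ (fun h : R => h^-1 *: ((f \o shift x) (h *: d) - f x))
  [set z : R | z <= f y - f x] (@closed_le _ _) _ _ Hc.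
apply.
near=> h.
have h0 : 0 < h by near: h; exact: nbhs_right_gt.
have h1 : h <= 1 by near: h; exact: nbhs_right_le.
rewrite /= /shift.
have -> : h *: d + x = h *: y + (1 - h) *: x.
  by rewrite /d scalerBr scalerBl scale1r -addrA [- _ + _]addrC.
have := cf y x h; rewrite (ltW h0) h1 => /(_ isT) Hcv.
rewrite /GRing.scale /= ler_pdivrMl //.
by lra.
Unshelve. all: by end_near.
Qed.

End Helpers.
Arguments grad_ineq {R}.

Section Helpers.
Variable R : realType.

Lemma bnorm_comp (I : finType) (P : pred I) (v : I -> R) i :
  P i -> `|v i| <= bnorm P v.
Proof.
move=> Pi; rewrite /bnorm -sqrtr_sqr ler_sqrt; last first.
  by apply: sumr_ge0 => j _; exact: sqr_ge0.
rewrite (bigD1 i) //= lerDl; apply: sumr_ge0 => j _; exact: sqr_ge0.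
Qed.

Lemma enorm_comp (I : finType) (v : I -> R) i : `|v i| <= enorm v.
Proof. exact: bnorm_comp. Qed.

Lemma enorm_sq (I : finType) (v : I -> R) : enorm v ^+ 2 = \sum_i v i ^+ 2.
Proof.
by rewrite /enorm /bnorm sqr_sqrtr //; apply: sumr_ge0 => j _; exact: sqr_ge0.
Qed.

Lemma enorm_ge0 (I : finType) (v : I -> R) : 0 <= enorm v.
Proof. exact: sqrtr_ge0. Qed.

Lemma pos_lip (a b : R) : `|pos a - pos b| <= `|a - b|.
Proof.
have h1 := ler_norm (a - b); have h2 := ler_norm (b - a); rewrite distrC in h2.
rewrite ler_norml.
have [a0|a0] := leP 0 a; have [b0|b0] := leP 0 b.
- rewrite !pos_id //; apply/andP; split; lra.
- rewrite (pos_id a0) (pos_0 (ltW b0)); apply/andP; split; lra.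
- rewrite (pos_id b0) (pos_0 (ltW a0)); apply/andP; split; lra.
- rewrite (pos_0 (ltW b0)) (pos_0 (ltW a0)); apply/andP; split; lra.
Qed.

Lemma pos_mul (a : R) : pos a * a = pos a ^+ 2.
Proof.
have [a0|a0] := leP 0 a; first by rewrite pos_id // expr2.
by rewrite pos_0 ?mul0r ?expr2 ?mul0r // ltW.
Qed.

Lemma kkt_opt n m p (g : 'I_m -> 'rV[R]_n -> R) (h : 'I_p -> 'rV[R]_n -> R)
  (xbar : 'rV[R]_n) (J : {set 'I_p}) (nu : 'I_p -> R) :
  (forall j, convex_fun (g j)) -> (forall j, convex_fun (h j)) ->
  (forall j, differentiable (g j) xbar) -> (forall j, differentiable (h j) xbar) ->
  (forall j, j \in J -> h j xbar = 0) -> (forall j, j \in J -> 0 <= nu j) ->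
  (forall i, \sum_(j in J) nu j * pd (h j) xbar i =
             - \sum_j pos (g j xbar) * pd (g j) xbar i) ->
  forall y, (forall j, h j y <= 0) ->
  enorm (fun j => pos (g j xbar)) ^+ 2 <= enorm (fun j => pos (g j y)) ^+ 2.
Proof.
move=> cg ch dg dh hJ nuJ KKT y hy.
rewrite !enorm_sq.
set d := fun i => y 0 i - xbar 0 i.
have S1 : \sum_j pos (g j xbar) * (\sum_i d i * pd (g j) xbar i) <=
          \sum_j pos (g j xbar) * (g j y - g j xbar).
  apply: ler_sum => j _; apply: ler_wpM2l; first exact: pos_ge0.
  exact: grad_ineq.
have S2 : \sum_j pos (g j xbar) * (\sum_i d i * pd (g j) xbar i) =
          - \sum_(j in J) nu j * (\sum_i d i * pd (h j) xbar i).
  under eq_bigr do rewrite mulr_sumr.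
  rewrite exchange_big /=.
  under [in RHS]eq_bigr do rewrite mulr_sumr.
  rewrite [in RHS]exchange_big /= -sumrN; apply: eq_bigr => i _.
  have E1 : \sum_j pos (g j xbar) * (d i * pd (g j) xbar i) =
     d i * \sum_j pos (g j xbar) * pd (g j) xbar i.
    by rewrite mulr_sumr; apply: eq_bigr => j _; ring.
  have E2 : \sum_(j in J) nu j * (d i * pd (h j) xbar i) =
     d i * \sum_(j in J) nu j * pd (h j) xbar i.
    by rewrite mulr_sumr; apply: eq_bigr => j _; ring.
  rewrite E1 E2 KKT; ring.
have S3 : \sum_(j in J) nu j * (\sum_i d i * pd (h j) xbar i) <= 0.
  apply: le_trans (_ : \sum_(j in J) nu j * (h j y - h j xbar) <= 0).
    apply: ler_sum => j jJ; apply: ler_wpM2l; first exact: nuJ.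
    exact: grad_ineq.
  rewrite -oppr_ge0 -sumrN; apply: sumr_ge0 => j jJ.
  by rewrite hJ // subr0 oppr_ge0; apply: mulr_ge0_le0 => //; exact: nuJ.
have S4 : \sum_j pos (g j xbar) ^+ 2 <= \sum_j pos (g j xbar) * g j y.
  have : 0 <= \sum_j pos (g j xbar) * (g j y - g j xbar) by lra.
  under eq_bigr do rewrite mulrBr.
  rewrite sumrB subr_ge0; under eq_bigr do rewrite pos_mul; done.
have S5 : forall j, 2 * (pos (g j xbar) * g j y) <=
                    pos (g j xbar) ^+ 2 + pos (g j y) ^+ 2.
  move=> j; have a0 := pos_ge0 (g j xbar); have b0 := pos_ge0 (g j y).
  have gb := pos_ge (g j y).
  have : pos (g j xbar) * g j y <= pos (g j xbar) * pos (g j y) by apply: ler_wpM2l.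
  have := sqr_ge0 (pos (g j xbar) - pos (g j y)). nra.
have S6 : \sum_j 2 * (pos (g j xbar) * g j y) <=
   \sum_j (pos (g j xbar) ^+ 2 + pos (g j y) ^+ 2).
  by apply: ler_sum => j _; exact: S5.
rewrite -mulr_sumr big_split /= in S6.
lra.
Qed.

End Helpers.
Arguments bnorm_comp {R}.
Arguments enorm_comp {R}.
Arguments enorm_sq {R}.
Arguments enorm_ge0 {R}.
Arguments pos_lip {R}.
Arguments pos_mul {R}.
Arguments kkt_opt {R}.

Section Helpers.
Variable R : realType.

Lemma cvg_sumP (T : Type) (F : set_system T) (FF : Filter F) (m : nat) (P : pred 'I_m)
  (f : 'I_m -> T -> R) (l : 'I_m -> R) :
  (forall j, P j -> f j @ F --> l j) ->
  (fun k => \sum_(j < m | P j) f j k) @ F --> \sum_(j < m | P j) l j.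
Proof.
move=> H; rewrite big_mkcond; under eq_fun do rewrite big_mkcond.
apply: (@cvg_sumU R T F FF m (fun j k => if P j then f j k else 0)) => j.
case: ifP => Pj; [exact: H | exact: cvg_cst].
Qed.

Lemma cvg_pos (T : Type) (F : set_system T) (FF : Filter F) (s : T -> R) (l : R) :
  s @ F --> l -> (fun k => pos (s k)) @ F --> pos l.
Proof.
move=> /cvgrPdist_le Hs; apply/cvgrPdist_le => e e0.
apply: filterS (Hs e e0) => k /= Hk; exact: le_trans (@pos_lip R l (s k)) Hk.
Qed.

Lemma cvg_abs0 (T : Type) (F : set_system T) (FF : Filter F) (f g : T -> R) :
  (\forall k \near F, `|f k| <= g k) -> g @ F --> 0 -> f @ F --> 0.
Proof.
move=> Hb Hg.
apply: (@squeeze_cvgr _ _ _ _ (fun k => - g k) g) => //.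
- apply: filterS Hb => k; rewrite ler_norml //.
- by rewrite -oppr0; apply: cvgN.
Qed.

Lemma cvg_oo_U (U : set_system nat) (UF : Filter U) :
  (forall N, \forall k \near U, (N <= k)%N) ->
  forall (s : nat -> R) (l : R), s @ \oo --> l -> (fun k => s k.+1) @ U --> l.
Proof.
move=> HU s l Hs A HA; have [N _ HN] := Hs A HA.
apply: filterS (HU N) => k Hk /=; apply: HN => /=; exact: leqW.
Qed.

Lemma cvg_oo_U0 (U : set_system nat) (UF : Filter U) :
  (forall N, \forall k \near U, (N <= k)%N) ->
  forall (s : nat -> R) (l : R), s @ \oo --> l -> s @ U --> l.
Proof.
move=> HU s l Hs A HA; have [N _ HN] := Hs A HA.
apply: filterS (HU N) => k Hk /=; apply: HN => /=; exact: Hk.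
Qed.

End Helpers.
Arguments cvg_sumP {R}.
Arguments cvg_pos {R}.
Arguments cvg_abs0 {R}.
Arguments cvg_oo_U {R}.
Arguments cvg_oo_U0 {R}.

Theorem theorem5p3
  (R : realType) (N n m p : nat)
  (blk : 'I_n -> 'I_N)
  (theta : 'I_N -> 'rV[R]_n -> R)
  (g : 'I_m -> 'rV[R]_n -> R) (h : 'I_p -> 'rV[R]_n -> R)
  (Htheta : forall nu, C1 (theta nu))
  (Hg : forall j, C1 (g j)) (Hh : forall j, C1 (h j))
  (Hgc : forall j, convex_fun (g j)) (Hhc : forall j, convex_fun (h j))
  (umax tau gamma : R) (eps eps' : nat -> R)
  (Humax : 0 <= umax) (Htau : 0 < tau < 1) (Hgamma : 1 < gamma)
  (x : nat -> 'rV[R]_n) (lam : nat -> 'I_m -> R) (mu : nat -> 'I_p -> R)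
  (u : nat -> 'I_m -> R) (rho : nat -> R)
  (Hrho0 : 0 < rho 0%N)
  (Hu0 : forall j, 0 <= u 0%N j <= umax)
  (Heps_nn : forall k, 0 <= eps k) (Heps_bd : exists M, forall k, eps k <= M)
  (Heps'_nn : forall k, 0 <= eps' k) (Heps'_lim : eps' @ \oo --> 0)
  (Hinex1 : forall k nu,
     bnorm (fun i => blk i == nu)
       (fun i => pd (La (theta nu) g (u k) (rho k)) (x k.+1) i
                 + \sum_j mu k.+1 j * pd (h j) (x k.+1) i) <= eps k)
  (Hinex2 : forall k,
     enorm (fun j => Num.min (- h j (x k.+1)) (mu k.+1 j)) <= eps' k)
  (Hlam : forall k j, lam k.+1 j = pos (u k j + rho k * g j (x k.+1)))
  (Hrho : forall k, rho k.+1 =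
     if enorm (fun j => Num.min (- g j (x k.+1)) (lam k.+1 j))
          <= tau * enorm (fun j => Num.min (- g j (x k)) (lam k j))
     then rho k else gamma * rho k)
  (Hu : forall k j, u k.+1 j = Num.min (lam k.+1 j) umax)
  (xbar : 'rV[R]_n)
  (Hlim : exists phi : nat -> nat, (forall k, (phi k < phi k.+1)%N) /\
            (x \o phi) @ \oo --> xbar)
  (Hcpld : CPLD h xbar) :
  ((forall j, h j xbar <= 0) /\
   (forall y : 'rV[R]_n, (forall j, h j y <= 0) ->
      enorm (fun j => pos (g j xbar)) ^+ 2 <= enorm (fun j => pos (g j y)) ^+ 2))
  /\
  ((exists y : 'rV[R]_n, (forall j, g j y <= 0) /\ (forall j, h j y <= 0)) ->
     (forall j, g j xbar <= 0) /\ (forall j, h j xbar <= 0)).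
Proof.
have dth : forall nu y, differentiable (theta nu) y.
  by move=> nu y; case: (Htheta nu) => H _; exact: H.
have dg : forall j y, differentiable (g j) y.
  by move=> j y; case: (Hg j) => H _; exact: H.
have dh : forall j y, differentiable (h j) y.
  by move=> j y; case: (Hh j) => H _; exact: H.
have cth : forall nu i, continuous (fun y => pd (theta nu) y i).
  by move=> nu i; case: (Htheta nu).
have cpg : forall j i, continuous (fun y => pd (g j) y i).
  by move=> j i; case: (Hg j).
have cph : forall j i, continuous (fun y => pd (h j) y i).
  by move=> j i; case: (Hh j).
have cg0 : forall j, continuous (g j).
  by move=> j y; apply: differentiable_continuous; exact: dg.
have ch0 : forall j, continuous (h j).
  by move=> j y; apply: differentiable_continuous; exact: dh.
have rpos : forall k, 0 < rho k.
  elim=> [//|k IH]; rewrite Hrho; case: ifP => _ //.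
  apply: mulr_gt0 => //; lra.
have rmono1 : forall k, rho k <= rho k.+1.
  move=> k; rewrite Hrho; case: ifP => _ //; have := rpos k; nra.
have rmono : forall a b, (a <= b)%N -> rho a <= rho b.
  move=> a b /subnK <-; elim: (b - a)%N => [|t IH]; first by rewrite add0n.
  by rewrite addSn; exact: le_trans IH (rmono1 _).
have ub : forall k j, 0 <= u k j <= umax.
  case=> [|k] j; first exact: Hu0.
  rewrite Hu; have l0 : 0 <= lam k.+1 j by rewrite Hlam; exact: pos_ge0.
  by apply/andP; split; [rewrite le_min l0 Humax | rewrite ge_min lexx orbT].
have minb : forall k j, - eps' k <= Num.min (- h j (x k.+1)) (mu k.+1 j).
  move=> k j; have := le_trans (@enorm_comp _ _ (fun j => Num.min (- h j (x k.+1)) (mu k.+1 j)) j) (Hinex2 k).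
  by rewrite ler_norml => /andP [].
have hb : forall k j, h j (x k.+1) <= eps' k.
  move=> k j; have := minb k j; rewrite le_min => /andP [H _]; lra.
have mub : forall k j, - eps' k <= mu k.+1 j.
  by move=> k j; have := minb k j; rewrite le_min => /andP [_ H].
case: Hlim => phi [phimono phicvg].
have phige : forall l, (l <= phi l)%N.
  elim=> [|l IH] //; exact: leq_ltn_trans IH (phimono l).
have F0P : ProperFilter ((fun l => (phi l).-1) @ (\oo : set_system nat)).
  exact: fmap_proper_filter.
have [U [UU F0U]] := ultraFilterLemma F0P.
have UF : ProperFilter U by exact: ultra_proper.
have FU : Filter U by apply: UF.
have Uinf : forall N, \forall k \near U, (N <= k)%N.
  move=> K; apply: F0U; exists K.+1 => // l /= Hl.
  have := phige l; lia.
have yconv : (fun k => x k.+1) @ U --> xbar.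
  move=> A HA; apply: F0U; have [K _ HK] := phicvg A HA.
  exists K.+1 => // l /= Hl.
  have := phige l => Hp.
  rewrite prednK; last lia.
  by apply: HK => /=; lia.
have contU : forall (f : 'rV[R]_n -> R), continuous f ->
    (fun k => f (x k.+1)) @ U --> f xbar.
  by move=> f cf; apply: continuous_cvg; [exact: cf|exact: yconv].
have epsU : eps' @ U --> 0 by exact: (cvg_oo_U0 U _ Uinf).
have hfeas : forall j, h j xbar <= 0.
  move=> j.
  have c1 : (fun k => h j (x k.+1) - eps' k) @ U --> h j xbar - 0.
    by apply: cvgB; [exact: contU|exact: epsU].
  rewrite subr0 in c1.
  apply: (@closed_cvg _ _ _ _ _ [set z : R | z <= 0] (@closed_le _ _) _ _ c1).
  by apply: filterE => k /=; rewrite subr_le0.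
have KKT : exists (J : {set 'I_p}) (nu : 'I_p -> R),
    [/\ (forall j, j \in J -> h j xbar = 0), (forall j, j \in J -> 0 <= nu j) &
     (forall i, \sum_(j in J) nu j * pd (h j) xbar i =
                - \sum_j pos (g j xbar) * pd (g j) xbar i)].
  have mb2 : forall k j, `|Num.min (- h j (x k.+1)) (mu k.+1 j)| <= eps' k.
    move=> k j; exact: le_trans (@enorm_comp _ _ (fun j => Num.min (- h j (x k.+1)) (mu k.+1 j)) j) (Hinex2 k).
  have [HK|HnK] := pselect (exists K, forall k, (K <= k)%N -> rho k.+1 = rho k).
    case: HK => K HK.
    set c := fun k => enorm (fun j => Num.min (- g j (x k)) (lam k j)).
    have cdec : forall k, (K <= k)%N -> c k.+1 <= tau * c k.
      move=> k Hk; have := Hrho k; case: ifP => // Hc E.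
      exfalso; have := HK k Hk; rewrite E => H; have := rpos k; nra.
    have tau0 : 0 < tau by case/andP: Htau.
    set C := c K / tau ^+ K.
    have cbound : forall t, c (K + t)%N <= tau ^+ (K + t) * C.
      elim=> [|t IH].
        by rewrite addn0 /C mulrCA mulfV ?mulr1 // expf_neq0 // gt_eqF.
      rewrite addnS; apply: le_trans (cdec _ (leq_addr t K)) _.
      by rewrite exprS -mulrA ler_wpM2l // ltW.
    have c0 : forall k, 0 <= c k by move=> k; exact: enorm_ge0.
    have ccv : c @ \oo --> 0.
      apply: (@squeeze_cvgr _ _ _ _ (fun=> 0) (fun k => tau ^+ k * C)).
      - exists K => // k /= Hk; rewrite c0 /=; have := cbound (k - K)%N.
        by rewrite subnKC.
      - exact: cvg_cst.
      - rewrite -(mul0r C); apply: cvgMr_tmp; apply: cvg_expr.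
        by rewrite ger0_norm ?ltW //; case/andP: Htau.
    have cU : (fun k => c k.+1) @ U --> 0 := cvg_oo_U U _ Uinf c 0 ccv.
    have gfeas : forall j, g j xbar <= 0.
      move=> j.
      have gb : forall k, g j (x k.+1) <= c k.+1.
        move=> k; have := @enorm_comp _ _ (fun j => Num.min (- g j (x k.+1)) (lam k.+1 j)) j.
        rewrite -/(c k.+1) ler_norml => /andP [H1 _]; move: H1; rewrite le_min => /andP [H1 _].
        lra.
      have c1 : (fun k => g j (x k.+1) - c k.+1) @ U --> g j xbar - 0.
        by apply: cvgB; [exact: contU|exact: cU].
      rewrite subr0 in c1.
      apply: (@closed_cvg _ _ _ _ _ [set z : R | z <= 0] (@closed_le _ _) _ _ c1).
      by apply: filterE => k /=; rewrite subr_le0.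
    exists (finset.set0 : {set 'I_p}), (fun=> 0); split => //; try by move=> j; rewrite inE.
    move=> i; rewrite big_set0 big1 ?oppr0 // => j _.
    by rewrite pos_0 ?mul0r.
  have step : forall Nn, exists k, gamma ^+ Nn * rho 0%N <= rho k.
    elim=> [|Nn [k Hk]]; first by exists 0%N; rewrite expr0 mul1r.
    have [k' [Hkk' Hne]] : exists k', (k <= k')%N /\ rho k'.+1 <> rho k'.
      apply: contrapT => H; apply: HnK; exists k => k' Hk'.
      apply: contrapT => Hne; apply: H; exists k'; split => //.
    exists k'.+1.
    have E : rho k'.+1 = gamma * rho k'.
      by move: (Hrho k'); case: ifP => // _ E; exfalso; exact: Hne E.
    rewrite E exprS -mulrA; apply: ler_wpM2l; first lra.
    exact: le_trans Hk (rmono _ _ Hkk').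
  have bern : forall Nn : nat, 1 + Nn%:R * (gamma - 1) <= gamma ^+ Nn.
    elim=> [|Nn IH]; first by rewrite mul0r addr0 expr0.
    rewrite exprS mulrSr.
    have H0 : 0 <= Nn%:R * (gamma - 1) by apply: mulr_ge0 => //; lra.
    have H1 : 0 <= Nn%:R * (gamma - 1) * (gamma - 1) by apply: mulr_ge0 => //; lra.
    nra.
  have rinf : forall B, exists k0, B <= rho k0.
    move=> B.
    set z := `|B| / ((gamma - 1) * rho 0%N).
    have z0 : 0 <= z by rewrite /z divr_ge0 // mulr_ge0 // ?ltW //; lra.
    have [k Hk] := step (Num.bound z).
    exists k; apply: le_trans Hk.
    have Hb := archi_boundP z0.
    have := bern (Num.bound z).
    have E : z * ((gamma - 1) * rho 0%N) = `|B|.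
      by rewrite /z divfK // mulf_neq0 // gt_eqF //; lra.
    have HB := ler_norm B.
    have g1 : 0 < gamma - 1 by lra.
    have : z * ((gamma - 1) * rho 0%N) <= (Num.bound z)%:R * ((gamma - 1) * rho 0%N).
      by apply: ler_wpM2r; [apply: mulr_ge0; lra | exact: ltW].
    nra.
  have rinvU : (fun k => (rho k)^-1) @ U --> 0.
    apply: (cvg_oo_U0 U _ Uinf).
    apply/cvgrPdist_le => e e0.
    have [k0 Hk0] := rinf (e^-1 + 1).
    exists k0 => // k /= Hk.
    rewrite sub0r normrN ger0_norm ?invr_ge0 ?ltW //.
    rewrite -[e]invrK ltf_pV2 ?posrE ?invr_gt0 //.
    have := le_trans Hk0 (rmono _ _ Hk); lra.
  case: Heps_bd => M HM.
  have cvgMU : forall (a b : nat -> R) (la lb : R), a @ U --> la -> b @ U --> lb ->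
      (fun k => a k * b k) @ U --> la * lb.
    by move=> a b la lb Ha Hb; exact: (@cvgM _ _ U _ a b la lb Ha Hb).
  have eqU : forall (a b : nat -> R) (l : R), (\forall k \near U, a k = b k) ->
      a @ U --> l -> b @ U --> l.
    move=> a b l Hab Ha A HA; apply: filterS2 Hab (Ha A HA) => k E /=.
    by rewrite -E.
  have T0 : forall i, (fun k => pd (theta (blk i)) (x k.+1) i / rho k
        + \sum_j pos (g j (x k.+1) + u k j / rho k) * pd (g j) (x k.+1) i
        + \sum_j (mu k.+1 j / rho k) * pd (h j) (x k.+1) i) @ U --> 0.
    move=> i.
    apply: (@cvg_abs0 R _ U _ _ (fun k => M * (rho k)^-1)); last first.
      by rewrite -(mulr0 M); apply: cvgMl_tmp.
    apply: filterE => k.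
    have B := le_trans (@bnorm_comp R _ (fun i0 => blk i0 == blk i)
       (fun i0 => pd (La (theta (blk i)) g (u k) (rho k)) (x k.+1) i0
                 + \sum_j mu k.+1 j * pd (h j) (x k.+1) i0) i (eqxx (blk i)))
       (Hinex1 k (blk i)).
    rewrite /= (pd_La _ _ _ _ _ _ _ _ (dth (blk i)) dg) in B.
    have rk := rpos k.
    have -> : pd (theta (blk i)) (x k.+1) i / rho k
        + \sum_j pos (g j (x k.+1) + u k j / rho k) * pd (g j) (x k.+1) i
        + \sum_j (mu k.+1 j / rho k) * pd (h j) (x k.+1) i =
        (pd (theta (blk i)) (x k.+1) i
        + rho k * \sum_j pos (g j (x k.+1) + u k j / rho k) * pd (g j) (x k.+1) i
        + \sum_j mu k.+1 j * pd (h j) (x k.+1) i) * (rho k)^-1.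
      rewrite !mulrDl; congr (_ + _ + _).
        by rewrite [rho k * _]mulrC mulfK // gt_eqF.
      by rewrite mulr_suml; apply: eq_bigr => j _; rewrite mulrAC.
    have ri : 0 <= (rho k)^-1 by rewrite invr_ge0 ltW.
    rewrite normrM (ger0_norm ri).
    apply: ler_wpM2r => //.
    exact: le_trans B (HM k).
  have A1 : forall i, (fun k => pd (theta (blk i)) (x k.+1) i / rho k) @ U --> 0.
    move=> i; rewrite -(mulr0 (pd (theta (blk i)) xbar i)).
    apply: (cvgMU (fun k => pd (theta (blk i)) (x k.+1) i) (fun k => (rho k)^-1)).
      exact: (contU (fun y => pd (theta (blk i)) y i)).
    exact: rinvU.
  have uU : forall j, (fun k => u k j / rho k) @ U --> 0.
    move=> j; apply: (@cvg_abs0 R _ U _ _ (fun k => umax * (rho k)^-1)); last first.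
      by rewrite -(mulr0 umax); apply: cvgMl_tmp.
    apply: filterE => k; have := ub k j => /andP [u0 u1].
    have ri : 0 <= (rho k)^-1 by rewrite invr_ge0 ltW.
    rewrite normrM (ger0_norm ri) (ger0_norm u0).
    by apply: ler_wpM2r.
  have A2 : forall i, (fun k => \sum_j pos (g j (x k.+1) + u k j / rho k) * pd (g j) (x k.+1) i)
      @ U --> \sum_j pos (g j xbar) * pd (g j) xbar i.
    move=> i; apply: cvg_sumU => j.
    apply: (cvgMU (fun k => pos (g j (x k.+1) + u k j / rho k)) (fun k => pd (g j) (x k.+1) i)); last first.
      exact: (contU (fun y => pd (g j) y i)).
    apply: cvg_pos; rewrite -[g j xbar]addr0; apply: cvgD; [exact: contU|exact: uU].
  have S : forall i, (fun k => \sum_j (mu k.+1 j / rho k) * pd (h j) (x k.+1) i) @ U -->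
      - \sum_j pos (g j xbar) * pd (g j) xbar i.
    move=> i; have := cvgB (cvgB (T0 i) (A1 i)) (A2 i).
    rewrite subrr sub0r => H; have {}H := H FU FU; apply: (eqU _ _ _ _ H).
    by apply: filterE => k /=; rewrite !fctE /=; ring.
  set A := [set j : 'I_p | h j xbar == 0]%SET.
  have E0 : (fun k => eps' k * (rho k)^-1) @ U --> 0.
    by rewrite -(mulr0 0); apply: cvgMU; [exact: epsU|exact: rinvU].
  have rconv : forall j, (fun k => mu k.+1 j / rho k -
      (if j \in A then pos (mu k.+1 j / rho k) else 0)) @ U --> 0.
    move=> j; apply: (@cvg_abs0 R _ U _ _ (fun k => eps' k * (rho k)^-1)) => //.
    case: (boolP (j \in A)) => jA.
      apply: filterE => k.
      have ri : 0 <= (rho k)^-1 by rewrite invr_ge0 ltW.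
      have a0 : - eps' k * (rho k)^-1 <= mu k.+1 j / rho k.
        by apply: ler_wpM2r => //; exact: mub.
      have e0 : 0 <= eps' k * (rho k)^-1 by apply: mulr_ge0.
      rewrite mulNr in a0.
      have [al|al] := leP 0 (mu k.+1 j / rho k).
        by rewrite pos_id // subrr normr0.
      rewrite pos_0 ?subr0; last exact: ltW.
      by rewrite ler_norml; apply/andP; split; lra.
    have hj : h j xbar < 0.
      by rewrite lt_neqAle hfeas andbT; rewrite inE in jA.
    have ev1 := cvgr_lt _ (contU _ (ch0 j)) (h j xbar / 2) (ltac:(lra)).
    have ev2 := cvgr_lt _ epsU (- h j xbar / 2) (ltac:(lra)).
    apply: filterS2 ev1 ev2 => k H1 H2 /=.
    have ri : 0 <= (rho k)^-1 by rewrite invr_ge0 ltW.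
    rewrite subr0 normrM (ger0_norm ri); apply: ler_wpM2r => //.
    have mb := mb2 k j.
    have [hm|hm] := leP (- h j (x k.+1)) (mu k.+1 j).
      rewrite min_l // in mb; have := ler_norm (- h j (x k.+1)); lra.
    have Em : Num.min (- h j (x k.+1)) (mu k.+1 j) = mu k.+1 j by rewrite min_r // ltW.
    by rewrite Em in mb.
  have S1 : forall i, (fun k => \sum_j (if j \in A then pos (mu k.+1 j / rho k) else 0)
        * pd (h j) (x k.+1) i) @ U --> - \sum_j pos (g j xbar) * pd (g j) xbar i.
    move=> i.
    have R0 : (fun k => \sum_j (mu k.+1 j / rho k -
      (if j \in A then pos (mu k.+1 j / rho k) else 0)) * pd (h j) (x k.+1) i) @ U --> 0.
      have Z : \sum_(j < p) 0 * pd (h j) xbar i = 0.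
        by rewrite big1 // => j _; rewrite mul0r.
      rewrite -[X in _ --> X]Z.
      apply: cvg_sumU => j.
      apply: (cvgMU (fun k => mu k.+1 j / rho k -
        (if j \in A then pos (mu k.+1 j / rho k) else 0)) (fun k => pd (h j) (x k.+1) i)).
        exact: rconv.
      exact: (contU (fun y => pd (h j) y i)).
    have H := cvgB (S i) R0; rewrite subr0 in H.
    have {}H := H FU; apply: (eqU _ _ _ _ H); apply: filterE => k /=; rewrite !fctE /=.
    by rewrite -sumrB; apply: eq_bigr => j _; ring.
  have CC : forall k, exists Jb : {set 'I_p} * ('I_p -> R),
      [/\ Jb.1 \subset A, (forall j, j \in Jb.1 -> 0 <= Jb.2 j),
       (forall i, \sum_(j in Jb.1) Jb.2 j * pd (h j) (x k.+1) i =
                  \sum_(j in A) pos (mu k.+1 j / rho k) * pd (h j) (x k.+1) i) &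
       (forall d : 'I_p -> R, (forall i, \sum_(j in Jb.1) d j * pd (h j) (x k.+1) i = 0) ->
          forall j, j \in Jb.1 -> d j = 0)].
    move=> k.
    have [J [b' H]] := carath p n (fun j i => pd (h j) (x k.+1) i) A
        (fun j => pos (mu k.+1 j / rho k)) (fun j _ => pos_ge0 _).
    by exists (J, b').
  case: (choice CC) => Jb HJb.
  have [Js HJs] := @ultra_pigeon nat U UU _ (fun k => (Jb k).1).
  have S3 : forall i, (fun k => \sum_(j in Js) (Jb k).2 j * pd (h j) (x k.+1) i) @ U -->
      - \sum_j pos (g j xbar) * pd (g j) xbar i.
    move=> i; apply: (eqU _ _ _ _ (S1 i)); apply: filterS HJs => k Hk /=.
    have [_ _ E _] := HJb k.
    rewrite -Hk E [RHS]big_mkcond /=; apply: eq_bigr => j _.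
    by case: ifP => _ //; rewrite mul0r.
  have uniqU : forall (a : nat -> R) (l1 l2 : R), a @ U --> l1 -> a @ U --> l2 -> l1 = l2.
    by move=> a l1 l2 H1 H2; apply: (cvg_unique _ H1 H2).
  set s := fun k => 1 + \sum_(j in Js) (Jb k).2 j.
  set t := fun k => (s k)^-1.
  have Ev : \forall k \near U, [/\ (Jb k).1 = Js, (forall j, j \in Js -> 0 <= (Jb k).2 j),
      1 <= s k, (forall j, j \in Js -> (Jb k).2 j <= s k) &
      (forall d : 'I_p -> R, (forall i, \sum_(j in Js) d j * pd (h j) (x k.+1) i = 0) ->
          forall j, j \in Js -> d j = 0)].
    apply: filterS HJs => k Hk; have [H1 H2 _ H4] := HJb k; rewrite Hk in H1 H2 H4.
    have Hsum : 0 <= \sum_(j in Js) (Jb k).2 j by apply: sumr_ge0 => j jJ; exact: H2.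
    split => //.
    - by rewrite /s lerDl.
    - move=> j jJ; rewrite /s (bigD1 j) //=.
      have : 0 <= \sum_(i | (i \in Js) && (i != j)) (Jb k).2 i.
        by apply: sumr_ge0 => i /andP [iJ _]; exact: H2.
      lra.
  have JsA : Js \subset A.
    have [k [Hk _ _ _ _]] := filter_ex Ev.
    by have [H1 _ _ _] := HJb k; rewrite Hk in H1.
  have hJs : forall j, j \in Js -> h j xbar = 0.
    by move=> j jJ; have := fintype.subsetP JsA j jJ; rewrite inE => /eqP.
  have tb : \forall k \near U, 0 <= t k <= 1.
    apply: filterS Ev => k [_ _ s1 _ _].
    by rewrite /t invr_ge0 invf_le1 ?s1 ?andbT //; lra.
  have [sig Hsig] := ultra_lim _ _ UU t 0 1 tb.
  have G : forall j, exists l : R,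
      (fun k => if j \in Js then (Jb k).2 j * t k else 0) @ U --> l.
    move=> j; apply: (ultra_lim _ _ UU _ 0 1).
    apply: filterS Ev => k [_ H2 s1 H4 _]; case: ifP => jJ; last by rewrite lexx ler01.
    have s0 : 0 < s k by lra.
    apply/andP; split; first by apply: mulr_ge0; [exact: H2|rewrite /t invr_ge0 ltW].
    by rewrite /t ler_pdivrMr // mul1r; exact: H4.
  case: (choice G) => gam Hgam.
  have gnn : forall j, j \in Js -> 0 <= gam j.
    move=> j jJ.
    apply: (@closed_cvg _ _ _ _ _ [set z : R | 0 <= z] (@closed_ge _ _) _ _ (Hgam j)).
    apply: filterS Ev => k [_ H2 s1 _ _] /=; rewrite jJ; apply: mulr_ge0; first exact: H2.
    rewrite /t invr_ge0; lra.
  have Ht' : forall i, (fun k => t k * \sum_(j in Js) (Jb k).2 j * pd (h j) (x k.+1) i) @ U -->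
      \sum_(j in Js) gam j * pd (h j) xbar i.
    move=> i.
    have H : (fun k => \sum_(j in Js) (if j \in Js then (Jb k).2 j * t k else 0)
        * pd (h j) (x k.+1) i) @ U --> \sum_(j in Js) gam j * pd (h j) xbar i.
      apply: cvg_sumP => j jJ.
      apply: (cvgMU (fun k => if j \in Js then (Jb k).2 j * t k else 0)
         (fun k => pd (h j) (x k.+1) i)); first exact: Hgam.
      exact: (contU (fun y => pd (h j) y i)).
    apply: (eqU _ _ _ _ H); apply: filterE => k /=; rewrite mulr_sumr.
    by apply: eq_bigr => j jJ; rewrite jJ; ring.
  have [sig0|sign0] := eqVneq sig 0.
    exfalso.
    have sum1 : \sum_(j in Js) gam j = 1.
      have H1 : (fun k => \sum_(j in Js) (if j \in Js then (Jb k).2 j * t k else 0))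
          @ U --> \sum_(j in Js) gam j by apply: cvg_sumP => j _; exact: Hgam.
      have H2 : (fun k => 1 - t k) @ U --> 1 - sig by apply: cvgB => //; exact: cvg_cst.
      rewrite sig0 subr0 in H2.
      apply: (uniqU _ _ _ H1); apply: (eqU _ _ _ _ H2).
      apply: filterS Ev => k [_ _ s1 _ _].
      have -> : \sum_(j in Js) (if j \in Js then (Jb k).2 j * t k else 0) =
          (\sum_(j in Js) (Jb k).2 j) * t k.
        by rewrite mulr_suml; apply: eq_bigr => j jJ; rewrite jJ.
      have s0 : s k != 0 by rewrite gt_eqF //; lra.
      rewrite /t /s in s0 *; field; exact: s0.
    have [j0 j0J gj0] : exists2 j, j \in Js & gam j != 0.
      apply: contrapT => Hn.
      have : \sum_(j in Js) gam j = 0.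
        apply: big1 => j jJ; apply/eqP; apply: contrapT => hn; apply: Hn; exists j => //.
        exact/negP.
      by rewrite sum1 => /eqP; rewrite oner_eq0.
    have comb0 : forall i, \sum_(j in Js) gam j * pd (h j) xbar i = 0.
      move=> i; have H := cvgMU _ _ _ _ Hsig (S3 i).
      rewrite sig0 mul0r in H.
      exact: (uniqU _ _ _ (Ht' i) H).
    have Hc := Hcpld Js hJs (ex_intro _ gam (conj gnn (conj (ex_intro2 _ _ j0 j0J gj0) comb0))).
    have Hc' := yconv _ Hc.
    have [k [[_ _ _ _ Hind] [be [[j1 j1J bj1] Hbe]]]] := filter_ex (filterI Ev Hc').
    by move: bj1; rewrite (Hind be Hbe j1 j1J) eqxx.
  exists Js, (fun j => gam j / sig); split => //.
    move=> j jJ; apply: divr_ge0; first exact: gnn.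
    apply: (@closed_cvg _ _ _ _ _ [set z : R | 0 <= z] (@closed_ge _ _) _ _ Hsig).
    by apply: filterS tb => k /andP [].
  have bconv : forall j, j \in Js -> (fun k => (Jb k).2 j) @ U --> gam j / sig.
    move=> j jJ.
    have H := cvgMU _ (fun k => (t k)^-1) _ _ (Hgam j) (cvgV sign0 Hsig).
    have {}H := H FU; apply: (eqU _ _ _ _ H); apply: filterS Ev => k [_ _ s1 _ _] /=.
    have s0 : s k != 0 by rewrite gt_eqF //; lra.
    by rewrite jJ /t invrK divfK.
  move=> i; apply: (uniqU _ _ _ _ (S3 i)).
  apply: cvg_sumP => j jJ.
  apply: (cvgMU (fun k => (Jb k).2 j) (fun k => pd (h j) (x k.+1) i)); first exact: bconv.
  exact: (contU (fun y => pd (h j) y i)).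
have opt : forall y : 'rV[R]_n, (forall j, h j y <= 0) ->
      enorm (fun j => pos (g j xbar)) ^+ 2 <= enorm (fun j => pos (g j y)) ^+ 2.
  case: KKT => J [nu [hJ nuJ E]] y hy.
  apply: (@kkt_opt R n m p g h xbar J nu) => // j; try exact: dg; exact: dh.
split; first by split.
move=> [y [gy hy]]; split => // j.
have := opt y hy.
rewrite [X in _ <= X]enorm_sq big1; last by move=> i _; rewrite pos_0 // expr0n.
rewrite enorm_sq (bigD1 j) //= => H.
have H2 : pos (g j xbar) ^+ 2 <= 0.
  apply: le_trans H; rewrite lerDl; apply: sumr_ge0 => i _; exact: sqr_ge0.
have H3 : pos (g j xbar) = 0.
  by apply/eqP; rewrite -sqrf_eq0 eq_le H2 sqr_ge0.
by rewrite -H3; exact: pos_ge.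
Qed.
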